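(* Let $(x_n,y_n)_{n\in\mathbb Z}$ and $(x'_n,y'_n)_{n\in\mathbb Z}$ be two elliptic sequences in general position on the same biquadratic polynomial $F$, let $A=y'_{-1}$, and let $f$ be a function defined on $\{x_n:n\ge0\}$ satisfying $(\mathcal Df)(y_n)=\dfrac{Y_2(y_n)}{y_n-A}$ for all $n\ge0$. Assume $C_{m,0,0}\ne0$ for all $m\ge1$. Put $c_0=f(x_0)$ and $c_m=\dfrac{y_{m-1}-y'_{m-1}}{C_{m,0,0}}$ for $m\ge1$. Then for every $N\ge0$ the partial sum $$S_N(x)=\sum_{m=0}^Nc_m\frac{(x-x_0)\cdots(x-x_{m-1})}{(x-x'_0)\cdots(x-x'_{m-1})}$$ satisfies $S_N(x_n)=f(x_n)$ for $n=0,1,\dots,N$; i.e. $f(x)=\sum_{m\ge0}c_m\frac{(x-x_0)\cdots(x-x_{m-1})}{(x-x'_0)\cdots(x-x'_{m-1})}$ as an interpolatory expansion.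
   Context: $F(x,y)=\sum_{i,j=0}^2c_{i,j}x^iy^j=Y_0(y)+xY_1(y)+x^2Y_2(y)=X_0(x)+yX_1(x)+y^2X_2(x)$. An elliptic sequence on $F$ is $(x_n,y_n)_{n\in\mathbb Z}$ such that for every $n$, $x_n,x_{n+1}$ are the two roots of $F(\cdot,y_n)$ and $y_{n-1},y_n$ the two roots of $F(x_n,\cdot)$; general position means all $x_n,x'_n$ distinct, all $y_n,y'_n$ distinct, $X_2,Y_2$ nonvanishing there. $(\mathcal Df)(y_n)=\frac{f(x_{n+1})-f(x_n)}{x_{n+1}-x_n}$; for rational $f$, $(\mathcal Df)(y)=\frac{f(x^+)-f(x^-)}{x^+-x^-}$ with $x^\pm$ the roots of $F(x,y)=0$. $C_{m,0,0}$ is the constant such that $\mathcal D\Big[\frac{(x-x_0)\cdots(x-x_{m-1})}{(x-x'_0)\cdots(x-x'_{m-1})}\Big](y)=C_{m,0,0}Y_2(y)\frac{(y-y_0)\cdots(y-y_{m-2})}{(y-y'_{-1})(y-y'_0)\cdots(y-y'_{m-1})}$ (such a constant exists). Empty products equal $1$. *)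

(* Defs.v *)
From HB Require Import structures.
From mathcomp Require Import all_boot all_order all_algebra.
Set Implicit Arguments. Unset Strict Implicit. Unset Printing Implicit Defensive.
Import Order.TTheory GRing.Theory Num.Theory.
Local Open Scope ring_scope.

Section Biquad.
Variable K : numClosedFieldType.
Variable c : 'I_3 -> 'I_3 -> K.

Definition Fb (x y : K) : K := \sum_(i < 3) \sum_(j < 3) c i j * x ^+ i * y ^+ j.
Definition Ycoef (i : 'I_3) (y : K) : K := \sum_(j < 3) c i j * y ^+ j.
Definition Xcoef (j : 'I_3) (x : K) : K := \sum_(i < 3) c i j * x ^+ i.
Definition Y2 := Ycoef (@inord 2 2).
Definition X2 := Xcoef (@inord 2 2).

(* "a and b are the two roots of F(., y)": F(., y) has degree 2 and
   F(t, y) = Y_2(y) (t - a) (t - b) identically in t. *)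
Definition two_roots_x (y a b : K) : Prop :=
  Y2 y != 0 /\ forall t, Fb t y = Y2 y * (t - a) * (t - b).
Definition two_roots_y (x a b : K) : Prop :=
  X2 x != 0 /\ forall s, Fb x s = X2 x * (s - a) * (s - b).

Definition elliptic_seq (x y : int -> K) : Prop :=
  forall n : int, two_roots_x (y n) (x n) (x (n + 1)) /\
                  two_roots_y (x n) (y (n - 1)) (y n).

Definition general_position (x y x' y' : int -> K) : Prop :=
  [/\ injective x, injective x', (forall n m, x n != x' m)
      & injective y] /\ [/\ injective y', (forall n m, y n != y' m) &
      forall n, [/\ X2 (x n) != 0, X2 (x' n) != 0,
                    Y2 (y n) != 0 & Y2 (y' n) != 0]].

Definition ratbasis (x x' : int -> K) (m : nat) (t : K) : K :=
  (\prod_(k < m) (t - x (Posz k))) / (\prod_(k < m) (t - x' (Posz k))).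

(* C is the constant C_{m,0,0}: the identity
   D[ratbasis m](y) = C Y_2(y) (y-y_0)...(y-y_{m-2}) /
                      ((y-y'_{-1})(y-y'_0)...(y-y'_{m-1}))
   holds (as rational functions of y; equivalently, since K is
   algebraically closed, at every point y where all terms are defined,
   with x^+ != x^- the two roots of F(., y)). *)
Definition is_Cm00 (x y x' y' : int -> K) (m : nat) (C : K) : Prop :=
  forall (yy a b : K),
    two_roots_x yy a b -> a != b ->
    (forall k : nat, (k < m)%N -> a != x' (Posz k) /\ b != x' (Posz k)) ->
    (forall k : nat, (k < m.+1)%N -> yy != y' (Posz k - 1)) ->
    (ratbasis x x' m a - ratbasis x x' m b) / (a - b) =
      C * Y2 yy * (\prod_(k < m.-1) (yy - y (Posz k)))
        / (\prod_(k < m.+1) (yy - y' (Posz k - 1))).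

End Biquad.

(* Main.v *)
Require Import Defs.
From HB Require Import structures.
From mathcomp Require Import all_boot all_order all_algebra.
From mathcomp Require Import ring.
Import Order.TTheory GRing.Theory Num.Theory.
Local Open Scope ring_scope.

Lemma posS1 (j : nat) : Posz j.+1 - 1 = Posz j.
Proof. by rewrite -addn1 PoszD addrK. Qed.

Lemma telescope_aux (K : fieldType) (Y : K) (yv yp : int -> K) (n : nat) :
  (forall k : int, Y - yp k != 0) -> Y = yv (Posz n) ->
  \sum_(j < n.+1) (yv (Posz j) - yp (Posz j)) * (\prod_(k < j) (Y - yv (Posz k)))
     / (\prod_(k < j.+2) (Y - yp (Posz k - 1))) = 1 / (Y - yp (-1)).
Proof.
move=> Hnz HY.
pose u j := \prod_(k < j) (Y - yv (Posz k)) / \prod_(k < j.+1) (Y - yp (Posz k - 1)).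
have Qnz : forall j, \prod_(k < j) (Y - yp (Posz k - 1)) != 0.
  by move=> j; apply/prodf_neq0 => k _; apply: Hnz.
have term : forall j, (yv (Posz j) - yp (Posz j)) * (\prod_(k < j) (Y - yv (Posz k)))
     / (\prod_(k < j.+2) (Y - yp (Posz k - 1))) = u j - u j.+1.
  move=> j; rewrite /u.
  have eP : \prod_(k < j.+1) (Y - yv (Posz k)) = \prod_(k < j) (Y - yv (Posz k)) * (Y - yv (Posz j)).
    by rewrite big_ord_recr.
  have eQ : \prod_(k < j.+2) (Y - yp (Posz k - 1)) = \prod_(k < j.+1) (Y - yp (Posz k - 1)) * (Y - yp (Posz j)).
    by rewrite big_ord_recr /= posS1.
  rewrite eP eQ.
  have h1 := Qnz j.+1; have h2 := Hnz (Posz j).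
  field; by rewrite h1 h2.
rewrite (eq_bigr (fun j : 'I_n.+1 => u j - u j.+1)); last by move=> j _; apply: term.
have tel : forall m, \sum_(j < m) (u j - u j.+1) = u 0%N - u m.
  elim=> [|m IH]; first by rewrite big_ord0 subrr.
  by rewrite big_ord_recr /= IH addrA subrK.
rewrite tel /u big_ord0 big_ord1 big_ord_recr /= -HY subrr mulr0 mul0r subr0.
by rewrite sub0r.
Qed.


Theorem mainTheorem9 (K : numClosedFieldType) (c : 'I_3 -> 'I_3 -> K)
    (x y x' y' : int -> K) (f : K -> K) (C : nat -> K) :
  elliptic_seq c x y -> elliptic_seq c x' y' ->
  general_position c x y x' y' ->
  (forall n : nat,
     (f (x (Posz n + 1)) - f (x (Posz n))) / (x (Posz n + 1) - x (Posz n))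
       = Y2 c (y (Posz n)) / (y (Posz n) - y' (-1))) ->
  (forall m : nat, (1 <= m)%N -> is_Cm00 c x y x' y' m (C m)) ->
  (forall m : nat, (1 <= m)%N -> C m != 0) ->
  let cm := fun m : nat =>
    if m is m1.+1 then (y (Posz m1) - y' (Posz m1)) / C m else f (x 0) in
  forall N n : nat, (n <= N)%N ->
    \sum_(m < N.+1) cm m * ratbasis x x' m (x (Posz n)) = f (x (Posz n)).
Proof.
move=> Ex Ex' [[Ix Ix' Hxx' Iy] [Iy' Hyy' Hnz]] Hf HC HC0 cm.
have r0 : forall m n : nat, (n < m)%N -> ratbasis x x' m (x (Posz n)) = 0.
  move=> m n lt; rewrite /ratbasis (bigD1 (Ordinal lt)) //= subrr !mul0r //.
have cut : forall n N : nat, (n <= N)%N ->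
    \sum_(m < N.+1) cm m * ratbasis x x' m (x (Posz n))
    = \sum_(m < n.+1) cm m * ratbasis x x' m (x (Posz n)).
  move=> n; elim=> [|N IH] le.
    by move: le; rewrite leqn0 => /eqP ->.
  case: (ltngtP n N.+1) le => // [lt _|-> //].
  by rewrite big_ord_recr /= r0 // mulr0 addr0 IH.
suff main : forall n : nat, \sum_(m < n.+1) cm m * ratbasis x x' m (x (Posz n)) = f (x (Posz n)).
  by move=> N n le; rewrite cut // main.
elim=> [|n IH].
  by rewrite big_ord1 /cm /ratbasis !big_ord0 divr1 mulr1.
have eab : Posz n + 1 = Posz n.+1 by rewrite -addn1 PoszD.
set a := x (Posz n.+1); set b := x (Posz n); set Y := y (Posz n).
have hab : a - b != 0 by rewrite subr_eq0; apply/eqP => /Ix [] /esym /n_Sn.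
have r1 : forall t, ratbasis x x' 0 t = 1 by move=> t; rewrite /ratbasis !big_ord0 divr1.
have DD : forall m : nat, (1 <= m)%N -> (ratbasis x x' m a - ratbasis x x' m b) / (a - b) =
      C m * Y2 c Y * (\prod_(k < m.-1) (Y - y (Posz k)))
        / (\prod_(k < m.+1) (Y - y' (Posz k - 1))).
  move=> m m1; apply: (HC m m1).
  - have [H1 H2] := (Ex (Posz n)).1; rewrite eab in H2.
    split=> // t; rewrite H2 -!mulrA; congr (_ * _); exact: mulrC.
  - by rewrite -subr_eq0.
  - by move=> k _; split; apply: Hxx'.
  - by move=> k _; apply: Hyy'.
pose T t := \sum_(m < n.+2) cm m * ratbasis x x' m t.
have Tb : T b = f b by rewrite /T (cut n n.+1) // IH.
have Hf' := Hf n; rewrite eab -/a -/b -/Y in Hf'.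
have DT : (T a - T b) / (a - b) = Y2 c Y / (Y - y' (-1)).
  rewrite /T -sumrB mulr_suml big_ord_recl /= !r1 subrr mul0r add0r.
  rewrite (eq_bigr (fun i : 'I_n.+1 => Y2 c Y * ((y (Posz i) - y' (Posz i))
      * (\prod_(k < i) (Y - y (Posz k))) / (\prod_(k < i.+2) (Y - y' (Posz k - 1)))))).
    rewrite -mulr_sumr telescope_aux //; last by move=> k; rewrite subr_eq0 Hyy'.
    by rewrite mul1r.
  move=> i _; change (bump 0 i) with i.+1; change (0 + i)%N with (nat_of_ord i).
  rewrite -mulrBr -(mulrA ((y (Posz i) - y' (Posz i)) / C i.+1)) DD //=.
  have hC := HC0 i.+1 isT.
  field; rewrite hC andbT; apply/prodf_neq0 => k _; by rewrite subr_eq0 Hyy'.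
change (T a = f a).
have -> : T a = T b + (a - b) * ((T a - T b) / (a - b)) by field.
rewrite DT Tb -Hf'; field; by rewrite hab.
Qed.
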